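(* Let $G>0$, $T>0$, and let $F\colon\mathbb R\to\mathbb R$ be continuous and $T$-periodic. Then the equation \[ \ddot x=\left(G\sqrt{1-x^2}-\frac{\dot x^2}{1-x^2}\right)x-(1-x^2)F(t) \] has a $T$-periodic solution $x\colon\mathbb R\to(-1,1)$. *)

(* Defs.v *)
From Stdlib Require Import Reals.
From Coquelicot Require Import Coquelicot.
Open Scope R_scope.

(* Main.v *)
Require Import Defs.
From Stdlib Require Import Reals Lra Lia ZArith.
From Coquelicot Require Import Coquelicot.
Open Scope R_scope.

Lemma is_derive_eqv (f : R -> R) x d1 d2 : is_derive f x d1 -> d1 = d2 -> is_derive f x d2.
Proof. intros H ->; exact H. Qed.

Lemma is_derive_expa a t : is_derive (fun s => exp (a * s)) t (a * exp (a * t)).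
Proof. eapply is_derive_eqv. auto_derive; auto. simpl; ring. Qed.

Lemma cont_expa a t : continuous (fun s => exp (a * s)) t.
Proof. apply (ex_derive_continuous (K:=R_AbsRing) (V:=R_NormedModule) (fun s => exp (a*s))). eexists. apply is_derive_expa. Qed.

Lemma cont_mult (f g : R -> R) t : continuous f t -> continuous g t -> continuous (fun s => f s * g s) t.
Proof. intros. apply (continuous_mult f g); auto. Qed.
Lemma cont_minus (f g : R -> R) t : continuous f t -> continuous g t -> continuous (fun s => f s - g s) t.
Proof. intros. apply (continuous_minus f g); auto. Qed.
Lemma cont_plus (f g : R -> R) t : continuous f t -> continuous g t -> continuous (fun s => f s + g s) t.
Proof. intros. apply (continuous_plus f g); auto. Qed.

Definition Iw (a : R) (h : R -> R) lo hi := RInt (fun s => exp (a * s) * h s) lo hi.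

Lemma ex_Iw a (h : R -> R) lo hi : (forall s, continuous h s) -> ex_RInt (fun s => exp (a * s) * h s) lo hi.
Proof. intros Hc. apply (ex_RInt_continuous (V:=R_CompleteNormedModule)). intros. apply cont_mult; auto. apply cont_expa. Qed.

Lemma Iw_lin a (h1 h2 : R -> R) lo hi : (forall s, continuous h1 s) -> (forall s, continuous h2 s) ->
  Iw a h1 lo hi - Iw a h2 lo hi = Iw a (fun s => h1 s - h2 s) lo hi.
Proof.
  intros C1 C2. unfold Iw.
  transitivity (RInt (fun s => minus (exp (a*s) * h1 s) (exp (a*s) * h2 s)) lo hi).
  rewrite (RInt_minus (V:=R_CompleteNormedModule) (fun s => exp (a*s) * h1 s) (fun s => exp (a*s) * h2 s)). reflexivity. apply ex_Iw; auto. apply ex_Iw; auto.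
  apply RInt_ext. intros. unfold minus, plus, opp; simpl. ring.
Qed.

Lemma Iw_nonneg a (h : R -> R) lo hi : (forall s, continuous h s) -> lo <= hi ->
  (forall s, lo <= s <= hi -> 0 <= h s) -> 0 <= Iw a h lo hi.
Proof.
  intros C Hle Hp. unfold Iw. apply RInt_ge_0; auto. apply ex_Iw; auto.
  intros. apply Rmult_le_pos. left; apply exp_pos. apply Hp; lra.
Qed.

Lemma Iw_const a c lo hi : a <> 0 -> Iw a (fun _ => c) lo hi = c * (exp (a*hi) - exp (a*lo)) / a.
Proof.
  intros Ha. unfold Iw. apply is_RInt_unique.
  replace (c * (exp (a*hi) - exp (a*lo)) / a) with
    (minus (c * exp (a*hi) / a) (c * exp (a*lo) / a)).
  2:{ unfold minus, plus, opp; simpl. field. auto. }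
  eapply is_RInt_ext.
  2:{ apply (is_RInt_derive (fun s => c * exp (a*s) / a) (fun s => c * (a * exp (a*s)) / a)).
      intros. eapply is_derive_eqv. auto_derive; auto. simpl; field; auto.
      intros. apply (cont_mult (fun s => c * (a * exp (a*s))) (fun _ => / a)).
      apply (cont_mult (fun _ => c)). apply continuous_const.
      apply (cont_mult (fun _ => a)). apply continuous_const. apply cont_expa. apply continuous_const. }
  intros. simpl. field. auto.
Qed.
Definition Pw k T (h : R -> R) t := Iw k h (t - T) t.
Definition Qw k T (h : R -> R) t := Iw (-k) h t (t + T).
Definition DD k T := 1 - exp (-(k*T)).
Definition cK k T := / (2 * k * DD k T).
Definition Kop k T h t := cK k T * (exp (-(k*t)) * Pw k T h t + exp (k*t) * Qw k T h t).
Definition Kd k T h t := cK k T * k * (- (exp (-(k*t)) * Pw k T h t) + exp (k*t) * Qw k T h t).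

Lemma DD_pos k T : 0 < k -> 0 < T -> 0 < DD k T.
Proof.
  intros. unfold DD. assert (exp (-(k*T)) < exp 0). apply exp_increasing.
  assert (0 < k*T) by (apply Rmult_lt_0_compat; auto). lra.
  rewrite exp_0 in H1. lra.
Qed.

Lemma exp_prod_eq a b c : a + b = c -> exp a * exp b = exp c.
Proof. intros <-. rewrite exp_plus. auto. Qed.

Lemma P_const k T c t : 0 < k -> exp (-(k*t)) * Pw k T (fun _ => c) t = c * DD k T / k.
Proof.
  intros Hk. unfold Pw, DD. rewrite Iw_const by lra.
  replace (exp (- (k * t)) * (c * (exp (k * t) - exp (k * (t - T))) / k))
    with (c * (exp (- (k * t)) * exp (k * t) - exp (- (k * t)) * exp (k * (t - T))) / k) by (field; lra).
  rewrite (exp_prod_eq _ _ 0) by ring. rewrite exp_0.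
  rewrite (exp_prod_eq _ _ (-(k*T))) by ring. reflexivity.
Qed.

Lemma Q_const k T c t : 0 < k -> exp (k*t) * Qw k T (fun _ => c) t = c * DD k T / k.
Proof.
  intros Hk. unfold Qw, DD. rewrite Iw_const by lra.
  replace (exp (k * t) * (c * (exp (- k * (t + T)) - exp (- k * t)) / - k))
    with (c * (exp (k * t) * exp (- k * t) - exp (k * t) * exp (- k * (t + T))) / k) by (field; lra).
  rewrite (exp_prod_eq _ _ 0) by ring. rewrite exp_0.
  rewrite (exp_prod_eq _ _ (-(k*T))) by ring. reflexivity.
Qed.

Lemma P_mono k T (h1 h2 : R -> R) t : 0 < T -> (forall s, continuous h1 s) -> (forall s, continuous h2 s) ->
  (forall s, t - T <= s <= t -> h1 s <= h2 s) ->
  exp (-(k*t)) * Pw k T h1 t <= exp (-(k*t)) * Pw k T h2 t.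
Proof.
  intros HT C1 C2 Hle. apply Rmult_le_compat_l. left; apply exp_pos.
  unfold Pw. cut (0 <= Iw k h2 (t - T) t - Iw k h1 (t-T) t). lra.
  rewrite Iw_lin by auto. apply Iw_nonneg. intros; apply cont_minus; auto. lra.
  intros s Hs. specialize (Hle s Hs). lra.
Qed.

Lemma Q_mono k T (h1 h2 : R -> R) t : 0 < T -> (forall s, continuous h1 s) -> (forall s, continuous h2 s) ->
  (forall s, t <= s <= t + T -> h1 s <= h2 s) ->
  exp (k*t) * Qw k T h1 t <= exp (k*t) * Qw k T h2 t.
Proof.
  intros HT C1 C2 Hle. apply Rmult_le_compat_l. left; apply exp_pos.
  unfold Qw. cut (0 <= Iw (-k) h2 t (t+T) - Iw (-k) h1 t (t+T)). lra.
  rewrite Iw_lin by auto. apply Iw_nonneg. intros; apply cont_minus; auto. lra.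
  intros s Hs. specialize (Hle s Hs). lra.
Qed.

Lemma P_bound k T (h : R -> R) t H : 0 < k -> 0 < T -> (forall s, continuous h s) ->
  (forall s, t - T <= s <= t -> Rabs (h s) <= H) ->
  Rabs (exp (-(k*t)) * Pw k T h t) <= H * DD k T / k.
Proof.
  intros Hk HT C Hb. apply Rabs_le. split.
  - replace (- (H * DD k T / k)) with ((-H) * DD k T / k) by (field; lra).
    rewrite <- (P_const k T (-H) t Hk). apply P_mono; auto. intros; apply continuous_const.
    intros s Hs. specialize (Hb s Hs). apply Rabs_le_between in Hb. lra.
  - rewrite <- (P_const k T H t Hk). apply P_mono; auto. intros; apply continuous_const.
    intros s Hs. specialize (Hb s Hs). apply Rabs_le_between in Hb. lra.
Qed.

Lemma Q_bound k T (h : R -> R) t H : 0 < k -> 0 < T -> (forall s, continuous h s) ->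
  (forall s, t <= s <= t + T -> Rabs (h s) <= H) ->
  Rabs (exp (k*t) * Qw k T h t) <= H * DD k T / k.
Proof.
  intros Hk HT C Hb. apply Rabs_le. split.
  - replace (- (H * DD k T / k)) with ((-H) * DD k T / k) by (field; lra).
    rewrite <- (Q_const k T (-H) t Hk). apply Q_mono; auto. intros; apply continuous_const.
    intros s Hs. specialize (Hb s Hs). apply Rabs_le_between in Hb. lra.
  - rewrite <- (Q_const k T H t Hk). apply Q_mono; auto. intros; apply continuous_const.
    intros s Hs. specialize (Hb s Hs). apply Rabs_le_between in Hb. lra.
Qed.

Lemma cK_pos k T : 0 < k -> 0 < T -> 0 < cK k T.
Proof. intros. unfold cK. apply Rinv_0_lt_compat. pose proof (DD_pos k T H H0).
  apply Rmult_lt_0_compat; lra. Qed.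

Lemma K_mono k T (h1 h2 : R -> R) t : 0 < k -> 0 < T -> (forall s, continuous h1 s) -> (forall s, continuous h2 s) ->
  (forall s, t - T <= s <= t + T -> h1 s <= h2 s) -> Kop k T h1 t <= Kop k T h2 t.
Proof.
  intros Hk HT C1 C2 Hle. unfold Kop. apply Rmult_le_compat_l. left; apply cK_pos; auto.
  apply Rplus_le_compat. apply P_mono; auto. intros; apply Hle; lra.
  apply Q_mono; auto. intros; apply Hle; lra.
Qed.

Lemma K_const k T c t : 0 < k -> 0 < T -> Kop k T (fun _ => c) t = c / (k*k).
Proof.
  intros Hk HT. unfold Kop. rewrite P_const, Q_const by auto. unfold cK.
  pose proof (DD_pos k T Hk HT). field. lra.
Qed.

Lemma K_lin k T (h1 h2 : R -> R) t : (forall s, continuous h1 s) -> (forall s, continuous h2 s) ->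
  Kop k T h1 t - Kop k T h2 t = Kop k T (fun s => h1 s - h2 s) t.
Proof.
  intros C1 C2. unfold Kop, Pw, Qw. rewrite <- !Iw_lin by auto. ring.
Qed.

Lemma Kd_bound k T (h : R -> R) t H : 0 < k -> 0 < T -> (forall s, continuous h s) ->
  (forall s, Rabs (h s) <= H) -> Rabs (Kd k T h t) <= H / k.
Proof.
  intros Hk HT C Hb.
  pose proof (P_bound k T h t H Hk HT C (fun s _ => Hb s)).
  pose proof (Q_bound k T h t H Hk HT C (fun s _ => Hb s)).
  pose proof (cK_pos k T Hk HT). pose proof (DD_pos k T Hk HT).
  unfold Kd. rewrite Rabs_mult. rewrite (Rabs_right (cK k T * k)) by nra.
  apply Rle_trans with (cK k T * k * (H * DD k T / k + H * DD k T / k)).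
  apply Rmult_le_compat_l. nra.
  eapply Rle_trans. apply Rabs_triang. rewrite Rabs_Ropp. lra.
  unfold cK. right. field. lra.
Qed.
Definition Aw a (h : R -> R) t := RInt (fun s => exp (a * s) * h s) 0 t.

Lemma Aw_derive a (h : R -> R) t : (forall s, continuous h s) -> is_derive (Aw a h) t (exp (a*t) * h t).
Proof.
  intros C. apply (is_derive_RInt (V:=R_CompleteNormedModule) (fun s => exp (a * s) * h s) (Aw a h) 0 t).
  apply filter_forall. intros b. apply RInt_correct. apply ex_Iw; auto.
  apply cont_mult; auto. apply cont_expa.
Qed.

Lemma Iw_split a (h : R -> R) lo hi : (forall s, continuous h s) -> Iw a h lo hi = Aw a h hi - Aw a h lo.
Proof.
  intros C. unfold Aw, Iw.
  rewrite <- (RInt_Chasles (V:=R_CompleteNormedModule) (fun s => exp (a * s) * h s) 0 lo hi).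
  assert (E: forall X Y : R, Y = plus X Y - X) by (intros; unfold plus; simpl; ring). apply E. apply ex_Iw; auto. apply ex_Iw; auto.
Qed.

Lemma K_derive k T (h : R -> R) (t : R) : 0 < k -> 0 < T -> (forall s, continuous h s) -> (forall s, h (s + T) = h s) ->
  is_derive (Kop k T h) t (Kd k T h t).
Proof.
  intros Hk HT C Hp.
  apply is_derive_ext with (fun t => cK k T * (exp (-(k*t)) * (Aw k h t - Aw k h (t - T))
        + exp (k*t) * (Aw (-k) h (t + T) - Aw (-k) h t))).
  { intros s. unfold Kop, Pw, Qw. rewrite !Iw_split by auto. reflexivity. }
  eapply is_derive_eqv. auto_derive.
  { repeat split; eexists; apply Aw_derive; auto. }
  { reflexivity. }
  rewrite !(is_derive_unique _ _ _ (Aw_derive _ _ _ C)).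
  replace (h (t + - T)) with (h t) by (rewrite <- (Hp (t + - T)); f_equal; ring).
  rewrite (Hp t).
  assert (E1: exp (k * (t + - T)) = exp (k*t) * exp (-(k*T))) by (rewrite <- exp_plus; f_equal; ring).
  assert (E2: exp (- k * (t + T)) = exp (-(k*t)) * exp (-(k*T))) by (rewrite <- exp_plus; f_equal; ring).
  assert (E3: exp (- k * t) = exp (-(k*t))) by (f_equal; ring).
  assert (E4: exp (-(k*t)) * exp (k*t) = 1) by (rewrite <- exp_plus, <- exp_0; f_equal; ring).
  rewrite E1, E2, E3.
  unfold Kd, Pw, Qw. rewrite !Iw_split by auto. replace (t + - T) with (t - T) by ring.
  pose proof (DD_pos k T Hk HT). unfold cK. unfold DD in *.
  field_simplify; try lra. simpl. field. repeat split; nra.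
Qed.

Lemma Kd_derive k T (h : R -> R) (t : R) : 0 < k -> 0 < T -> (forall s, continuous h s) -> (forall s, h (s + T) = h s) ->
  is_derive (Kd k T h) t (k * k * Kop k T h t - h t).
Proof.
  intros Hk HT C Hp.
  apply is_derive_ext with (fun t => cK k T * k * (- (exp (-(k*t)) * (Aw k h t - Aw k h (t - T)))
        + exp (k*t) * (Aw (-k) h (t + T) - Aw (-k) h t))).
  { intros s. unfold Kd, Pw, Qw. rewrite !Iw_split by auto. reflexivity. }
  eapply is_derive_eqv. auto_derive.
  { repeat split; eexists; apply Aw_derive; auto. }
  { reflexivity. }
  rewrite !(is_derive_unique _ _ _ (Aw_derive _ _ _ C)).
  replace (h (t + - T)) with (h t) by (rewrite <- (Hp (t + - T)); f_equal; ring).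
  rewrite (Hp t).
  assert (E1: exp (k * (t + - T)) = exp (k*t) * exp (-(k*T))) by (rewrite <- exp_plus; f_equal; ring).
  assert (E2: exp (- k * (t + T)) = exp (-(k*t)) * exp (-(k*T))) by (rewrite <- exp_plus; f_equal; ring).
  assert (E3: exp (- k * t) = exp (-(k*t))) by (f_equal; ring).
  assert (E4: exp (-(k*t)) * exp (k*t) = 1) by (rewrite <- exp_plus, <- exp_0; f_equal; ring).
  rewrite E1, E2, E3.
  unfold Kop, Pw, Qw. rewrite !Iw_split by auto. replace (t + - T) with (t - T) by ring.
  pose proof (DD_pos k T Hk HT). unfold cK. unfold DD in *.
  rewrite (exp_Ropp (k*t)). pose proof (exp_pos (k*t)).
  simpl. field. repeat split; nra.
Qed.

Lemma Iw_shift a (h : R -> R) lo hi T : (forall s, continuous h s) -> (forall s, h (s + T) = h s) ->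
  Iw a h (lo + T) (hi + T) = exp (a * T) * Iw a h lo hi.
Proof.
  intros C Hp. unfold Iw.
  pose proof (RInt_comp_lin (V:=R_CompleteNormedModule) (fun s => exp (a * s) * h s) 1 T lo hi) as E.
  replace (1 * lo + T) with (lo + T) in E by ring. replace (1 * hi + T) with (hi + T) in E by ring.
  rewrite <- E by (apply ex_Iw; auto).
  transitivity (RInt (fun y => scal (exp (a*T)) (exp (a * y) * h y)) lo hi).
  apply RInt_ext. intros x _. unfold scal; simpl. unfold mult; simpl.
  replace (1 * x + T) with (x + T) by ring. rewrite Hp.
  replace (a * (x + T)) with (a * T + a * x) by ring. rewrite exp_plus. ring.
  rewrite (RInt_scal (V:=R_CompleteNormedModule)). reflexivity. apply ex_Iw; auto.
Qed.

Lemma K_period k T (h : R -> R) t : 0 < k -> 0 < T -> (forall s, continuous h s) -> (forall s, h (s + T) = h s) ->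
  Kop k T h (t + T) = Kop k T h t.
Proof.
  intros Hk HT C Hp. unfold Kop, Pw, Qw.
  replace (t + T - T) with ((t - T) + T) by ring.
  rewrite !Iw_shift by auto.
  assert (E1: exp (- (k * (t + T))) * exp (k * T) = exp (-(k*t))) by (rewrite <- exp_plus; f_equal; ring).
  assert (E2: exp (k * (t + T)) * exp (- k * T) = exp (k*t)) by (rewrite <- exp_plus; f_equal; ring).
  rewrite <- E1, <- E2 at 1. ring.
Qed.

Lemma lip_of_deriv (f df : R -> R) L : (forall x, is_derive f x (df x)) -> (forall x, Rabs (df x) <= L) ->
  forall a b, Rabs (f a - f b) <= L * Rabs (a - b).
Proof.
  intros Hd Hb a b.
  destruct (MVT_gen f b a df) as [c [Hc E]].
  - intros; apply Hd.
  - intros x _. apply continuity_pt_filterlim.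
    apply (ex_derive_continuous (K:=R_AbsRing) (V:=R_NormedModule) f). eexists; apply Hd.
  - rewrite E, Rabs_mult. apply Rmult_le_compat_r. apply Rabs_pos. apply Hb.
Qed.

Lemma sin_lip a b : Rabs (sin a - sin b) <= Rabs (a - b).
Proof.
  rewrite <- (Rmult_1_l (Rabs (a - b))). apply (lip_of_deriv sin cos).
  intros; apply is_derive_Reals, derivable_pt_lim_sin.
  intros; apply Rabs_le, COS_bound.
Qed.

Lemma cos_lip a b : Rabs (cos a - cos b) <= Rabs (a - b).
Proof.
  rewrite <- (Rmult_1_l (Rabs (a - b))). apply (lip_of_deriv cos (fun x => - sin x)).
  intros; apply is_derive_Reals, derivable_pt_lim_cos.
  intros; rewrite Rabs_Ropp; apply Rabs_le, SIN_bound.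
Qed.

Lemma per_nat (F : R -> R) T : (forall t, F (t + T) = F t) -> forall n t,
  F (t + INR n * T) = F t /\ F (t - INR n * T) = F t.
Proof.
  intros Hp n. induction n; intros t.
  - simpl. split; f_equal; ring.
  - rewrite S_INR. destruct (IHn t) as [A B]. split.
    + replace (t + (INR n + 1) * T) with ((t + INR n * T) + T) by ring. rewrite Hp. auto.
    + rewrite <- B. rewrite <- (Hp (t - (INR n + 1) * T)). f_equal. ring.
Qed.

Lemma per_reduce (F : R -> R) T : 0 < T -> (forall t, F (t + T) = F t) -> forall t,
  exists t0, 0 <= t0 <= T /\ F t = F t0.
Proof.
  intros HT Hp t. destruct (archimed (t / T)) as [A B].
  set (z := (up (t / T) - 1)%Z).
  assert (Hz : IZR z <= t / T < IZR z + 1) by (unfold z; rewrite minus_IZR; simpl; lra).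
  assert (Hz2 : IZR z * T <= t < IZR z * T + T).
  { destruct Hz as [H1 H2]. split.
    - apply Rmult_le_compat_r with (r := T) in H1; [|lra]. unfold Rdiv in H1.
      rewrite Rmult_assoc, Rinv_l, Rmult_1_r in H1; lra.
    - apply Rmult_lt_compat_r with (r := T) in H2; [|lra]. unfold Rdiv in H2.
      rewrite Rmult_assoc, Rinv_l, Rmult_1_r in H2; lra. }
  exists (t - IZR z * T). split. lra.
  destruct (Z_le_gt_dec 0 z) as [Hp0|Hn0].
  - destruct (Z_of_nat_complete z Hp0) as [n Hn]. rewrite Hn, <- INR_IZR_INZ.
    symmetry. apply (per_nat F T Hp n t).
  - assert (Hm : (0 <= - z)%Z) by lia. destruct (Z_of_nat_complete (-z) Hm) as [n Hn].
    replace (IZR z) with (- IZR (-z)) by (rewrite opp_IZR; ring). rewrite Hn, <- INR_IZR_INZ.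
    replace (t - - INR n * T) with (t + INR n * T) by ring.
    symmetry. apply (per_nat F T Hp n t).
Qed.

Lemma F_bounded (F : R -> R) T : 0 < T -> (forall t, continuous F t) -> (forall t, F (t + T) = F t) ->
  exists B, 0 <= B /\ forall t, Rabs (F t) <= B.
Proof.
  intros HT Hc Hp.
  destruct (continuity_ab_maj F 0 T) as [x1 [H1 _]]. lra.
  { intros; apply continuity_pt_filterlim; apply Hc. }
  destruct (continuity_ab_maj (fun t => - F t) 0 T) as [x2 [H2 _]]. lra.
  { intros; apply continuity_pt_opp. apply continuity_pt_filterlim; apply Hc. }
  exists (Rabs (F x1) + Rabs (F x2)). split. pose proof (Rabs_pos (F x1)); pose proof (Rabs_pos (F x2)); lra.
  intros t. destruct (per_reduce F T HT Hp t) as [t0 [Ht0 E]]. rewrite E.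
  specialize (H1 t0 Ht0). specialize (H2 t0 Ht0).
  apply Rabs_le. split.
  - pose proof (Rabs_pos (F x1)). pose proof (proj1 (Rabs_le_between (F x2) (Rabs (F x2))) (Rle_refl _)). lra.
  - pose proof (Rabs_pos (F x2)). pose proof (proj1 (Rabs_le_between (F x1) (Rabs (F x1))) (Rle_refl _)). lra.
Qed.

Lemma unif_conv (u : nat -> R -> R) (l : R -> R) L lo hi :
  0 <= L -> lo <= hi ->
  (forall s, Un_cv (fun n => u n s) (l s)) ->
  (forall n a b, Rabs (u n a - u n b) <= L * Rabs (a - b)) ->
  (forall a b, Rabs (l a - l b) <= L * Rabs (a - b)) ->
  forall eps, 0 < eps -> exists N, forall n, (N <= n)%nat -> forall s, lo <= s <= hi -> Rabs (u n s - l s) <= eps.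
Proof.
  intros HL Hlh Hcv Hu Hl eps He.
  set (d := eps / (4 * (L + 1))).
  assert (Hd : 0 < d) by (unfold d; apply Rdiv_lt_0_compat; lra).
  assert (grid : forall m, exists N, forall n, (N <= n)%nat -> forall j, (j <= m)%nat ->
            Rabs (u n (lo + INR j * d) - l (lo + INR j * d)) <= eps / 2).
  { induction m.
    - destruct (Hcv (lo + INR 0 * d) (eps/2)) as [N HN]. lra.
      exists N. intros n Hn j Hj. assert (j = 0%nat) by lia. subst j.
      left. apply HN. lia.
    - destruct IHm as [N1 HN1].
      destruct (Hcv (lo + INR (S m) * d) (eps/2)) as [N2 HN2]. lra.
      exists (max N1 N2). intros n Hn j Hj.
      destruct (Nat.eq_dec j (S m)) as [->|Hne].
      + left. apply HN2. lia.
      + apply HN1. lia. lia. }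
  assert (cover : forall m s, lo <= s <= lo + INR m * d ->
            exists j, (j <= m)%nat /\ Rabs (s - (lo + INR j * d)) <= d).
  { induction m; intros s Hs.
    - exists 0%nat. split. lia. simpl in *. rewrite Rabs_le_between. lra.
    - destruct (Rle_dec s (lo + INR m * d)) as [Hle|Hgt].
      + destruct (IHm s) as [j [Hj Hj2]]. lra. exists j. split. lia. auto.
      + exists (S m). split. lia. rewrite S_INR in *. rewrite Rabs_le_between. nra. }
  destruct (archimed_cor1 (d / (hi - lo + 1))) as [m [Hm Hm0]].
  { apply Rdiv_lt_0_compat; lra. }
  assert (Hmd : hi - lo + 1 < INR m * d).
  { apply lt_0_INR in Hm0.
    assert (/ INR m * ((hi - lo + 1) * INR m) < d / (hi - lo + 1) * ((hi - lo + 1) * INR m)).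
    { apply Rmult_lt_compat_r. nra. auto. }
    replace (/ INR m * ((hi - lo + 1) * INR m)) with (hi - lo + 1) in H by (field; lra).
    replace (d / (hi - lo + 1) * ((hi - lo + 1) * INR m)) with (INR m * d) in H by (field; lra).
    auto. }
  destruct (grid m) as [N HN]. exists N. intros n Hn s Hs.
  destruct (cover m s) as [j [Hj Hsj]]. lra.
  specialize (HN n Hn j Hj).
  set (g := lo + INR j * d) in *.
  assert (E: u n s - l s = (u n s - u n g) + (u n g - l g) + (l g - l s)) by ring.
  rewrite E.
  eapply Rle_trans. apply Rabs_triang. eapply Rle_trans. apply Rplus_le_compat_r. apply Rabs_triang.
  pose proof (Hu n s g). pose proof (Hl g s).
  assert (Hsj2 : Rabs (g - s) <= d) by (rewrite Rabs_minus_sym; auto).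
  assert (L * Rabs (s - g) <= L * d) by (apply Rmult_le_compat_l; auto).
  assert (L * Rabs (g - s) <= L * d) by (apply Rmult_le_compat_l; auto).
  assert (2 * (L * d) <= eps / 2).
  { unfold d. apply Rmult_le_reg_r with (4 * (L+1)). lra.
    replace (2 * (L * (eps / (4 * (L + 1)))) * (4 * (L + 1))) with (2 * L * eps) by (field; lra). nra. }
  lra.
Qed.

Lemma lip_cont (f : R -> R) L : 0 <= L -> (forall a b, Rabs (f a - f b) <= L * Rabs (a - b)) ->
  forall x, continuous f x.
Proof.
  intros HL Hl x. apply continuity_pt_filterlim.
  intros eps Heps. exists (eps / (L + 1)). split. apply Rdiv_lt_0_compat; lra.
  intros y [_ Hy]. simpl in *. unfold R_dist in *. eapply Rle_lt_trans. apply Hl.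
  apply Rle_lt_trans with (L * (eps / (L+1))). apply Rmult_le_compat_l; lra.
  assert (0 < eps / (L + 1)) by (apply Rdiv_lt_0_compat; lra).
  replace eps with ((L+1) * (eps / (L+1))) at 2 by (field; lra). nra.
Qed.

Lemma cont_sin_comp (g : R -> R) t : continuous g t -> continuous (fun s => sin (g s)) t.
Proof.
  intros Hg. apply (continuous_comp g sin). auto.
  apply (ex_derive_continuous (K:=R_AbsRing) (V:=R_NormedModule) sin). eexists.
  apply is_derive_Reals, derivable_pt_lim_sin.
Qed.

Lemma cont_cos_comp (g : R -> R) t : continuous g t -> continuous (fun s => cos (g s)) t.
Proof.
  intros Hg. apply (continuous_comp g cos). auto.
  apply (ex_derive_continuous (K:=R_AbsRing) (V:=R_NormedModule) cos). eexists.
  apply is_derive_Reals, derivable_pt_lim_cos.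
Qed.

Definition fN (G : R) (F : R -> R) M t th := M * th - (G * sin th - F t * cos th).

Lemma fN_cont G (F g : R -> R) M t : continuous F t -> continuous g t -> continuous (fun s => fN G F M s (g s)) t.
Proof.
  intros HF Hg. unfold fN. apply cont_minus. apply (cont_mult (fun _ => M)); auto. apply continuous_const.
  apply cont_minus. apply (cont_mult (fun _ => G)). apply continuous_const. apply cont_sin_comp; auto.
  apply cont_mult; auto. apply cont_cos_comp; auto.
Qed.

Lemma fN_diff G (F : R -> R) t a b : 0 <= G ->
  Rabs ((G * sin b - F t * cos b) - (G * sin a - F t * cos a)) <= (G + Rabs (F t)) * Rabs (b - a).
Proof.
  intros HG.
  replace ((G * sin b - F t * cos b) - (G * sin a - F t * cos a)) with
    (G * (sin b - sin a) - F t * (cos b - cos a)) by ring.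
  eapply Rle_trans. apply Rabs_triang. rewrite Rabs_Ropp, !Rabs_mult, (Rabs_right G) by lra.
  pose proof (sin_lip b a). pose proof (cos_lip b a). pose proof (Rabs_pos (F t)).
  nra.
Qed.

Lemma fN_mono G (F : R -> R) M t a b : 0 <= G -> G + Rabs (F t) <= M -> a <= b -> fN G F M t a <= fN G F M t b.
Proof.
  intros HG HM Hab. unfold fN. pose proof (fN_diff G F t a b HG).
  rewrite (Rabs_right (b - a)) in H by lra. apply Rabs_le_between in H.
  assert ((G + Rabs (F t)) * (b - a) <= M * (b - a)) by (apply Rmult_le_compat_r; lra). lra.
Qed.

Lemma fN_lip G (F : R -> R) M t a b : 0 <= G -> G + Rabs (F t) <= M ->
  Rabs (fN G F M t a - fN G F M t b) <= 2 * M * Rabs (a - b).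
Proof.
  intros HG HM. unfold fN. pose proof (fN_diff G F t b a HG).
  replace (M * a - (G * sin a - F t * cos a) - (M * b - (G * sin b - F t * cos b))) with
    (M * (a - b) - ((G * sin a - F t * cos a) - (G * sin b - F t * cos b))) by ring.
  eapply Rle_trans. apply Rabs_triang. rewrite Rabs_Ropp, Rabs_mult.
  pose proof (Rabs_pos (F t)). rewrite (Rabs_right M) by lra.
  assert ((G + Rabs (F t)) * Rabs (a - b) <= M * Rabs (a - b)) by (apply Rmult_le_compat_r; [apply Rabs_pos|lra]).
  lra.
Qed.

Lemma fN_bound G (F : R -> R) M t a : 0 <= G -> G + Rabs (F t) <= M -> Rabs a <= PI / 2 ->
  Rabs (fN G F M t a) <= M * (PI / 2 + 1).
Proof.
  intros HG HM Ha. unfold fN. pose proof (Rabs_pos (F t)).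
  pose proof (SIN_bound a). pose proof (COS_bound a).
  assert (Rabs (G * sin a) <= G). { rewrite Rabs_mult, (Rabs_right G) by lra.
     assert (Rabs (sin a) <= 1) by (apply Rabs_le; lra).
     pose proof (Rabs_pos (sin a)). nra. }
  assert (Rabs (F t * cos a) <= Rabs (F t)). { rewrite Rabs_mult. assert (Rabs (cos a) <= 1) by (apply Rabs_le; lra).
     pose proof (Rabs_pos (cos a)). pose proof (Rabs_pos (F t)). nra. }
  assert (Rabs (M * a) <= M * (PI / 2)). { rewrite Rabs_mult, (Rabs_right M) by lra.
     apply Rmult_le_compat_l; lra. }
  eapply Rle_trans. apply Rabs_triang. rewrite Rabs_Ropp.
  eapply Rle_trans. apply Rplus_le_compat_l. apply Rabs_triang. rewrite Rabs_Ropp. lra.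
Qed.

Definition Hyp G T (F : R -> R) M : Prop :=
  0 < G /\ 0 < T /\ (forall t, continuous F t) /\ (forall t, F (t + T) = F t) /\ (forall t, G + Rabs (F t) + 1 <= M).

Fixpoint th G T (F : R -> R) M (n : nat) : R -> R :=
  match n with
  | O => fun _ => - (PI / 2)
  | S n' => Kop (sqrt M) T (fun s => fN G F M s (th G T F M n' s))
  end.

Lemma Hyp_M G T F M : Hyp G T F M -> 1 < M.
Proof. intros (HG & HT & Hc & Hp & HM). specialize (HM 0). pose proof (Rabs_pos (F 0)). lra. Qed.

Lemma sqrtM_pos M : 1 < M -> 0 < sqrt M.
Proof. intros. apply sqrt_lt_R0. lra. Qed.

Lemma sqrtM_sq M : 1 < M -> sqrt M * sqrt M = M.
Proof. intros. apply sqrt_sqrt. lra. Qed.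

Lemma th_cp G T F M : Hyp G T F M -> forall n,
  (forall s, continuous (th G T F M n) s) /\ (forall s, th G T F M n (s + T) = th G T F M n s).
Proof.
  intros HH. pose proof (Hyp_M _ _ _ _ HH) as HM1. destruct HH as (HG & HT & Hc & Hp & HM).
  induction n as [|n [IHc IHp]].
  - split; intros; simpl. apply continuous_const. reflexivity.
  - assert (Hhc : forall s, continuous (fun s => fN G F M s (th G T F M n s)) s).
    { intros; apply fN_cont; auto. }
    assert (Hhp : forall s, fN G F M (s + T) (th G T F M n (s + T)) = fN G F M s (th G T F M n s)).
    { intros; unfold fN. rewrite Hp, IHp. reflexivity. }
    split; intros s; simpl.
    + apply (ex_derive_continuous (K:=R_AbsRing) (V:=R_NormedModule)). eexists.
      apply K_derive; auto. apply sqrtM_pos; auto.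
    + apply K_period; auto. apply sqrtM_pos; auto.
Qed.

Lemma hn_cont G T F M n : Hyp G T F M -> forall s, continuous (fun s => fN G F M s (th G T F M n s)) s.
Proof.
  intros HH s. pose proof (th_cp _ _ _ _ HH n) as [C _]. destruct HH as (HG & HT & Hc & Hp & HM).
  apply fN_cont; auto.
Qed.

Lemma th_up G T F M : Hyp G T F M -> forall n t, th G T F M n t <= PI / 2.
Proof.
  intros HH. pose proof (Hyp_M _ _ _ _ HH) as HM1. pose proof HH as HH'. destruct HH as (HG & HT & Hc & Hp & HM).
  pose proof PI_RGT_0.
  induction n; intros t. simpl. lra.
  simpl. apply Rle_trans with (Kop (sqrt M) T (fun _ => M * (PI / 2) - G) t).
  - apply K_mono; auto. apply sqrtM_pos; auto. apply hn_cont; auto. intros; apply continuous_const.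
    intros s _. replace (M * (PI / 2) - G) with (fN G F M s (PI / 2)).
    apply fN_mono; auto. lra. specialize (HM s). lra.
    unfold fN. rewrite sin_PI2, cos_PI2. ring.
  - rewrite K_const. rewrite sqrtM_sq by auto. apply Rmult_le_reg_r with M. lra.
    unfold Rdiv. rewrite Rmult_assoc, Rinv_l by lra. nra. apply sqrtM_pos; auto. auto.
Qed.

Lemma th_mono G T F M : Hyp G T F M -> forall n t, th G T F M n t <= th G T F M (S n) t.
Proof.
  intros HH. pose proof (Hyp_M _ _ _ _ HH) as HM1. pose proof HH as HH'. destruct HH as (HG & HT & Hc & Hp & HM).
  pose proof PI_RGT_0.
  induction n; intros t.
  - simpl. apply Rle_trans with (Kop (sqrt M) T (fun _ => - M * (PI / 2) + G) t).
    + rewrite K_const. rewrite sqrtM_sq by auto. apply Rmult_le_reg_r with M. lra.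
      unfold Rdiv. rewrite Rmult_assoc, Rinv_l by lra. nra. apply sqrtM_pos; auto. auto.
    + apply K_mono; auto. apply sqrtM_pos; auto. intros; apply continuous_const.
      apply (hn_cont G T F M 0); auto.
      intros s _. simpl. unfold fN. rewrite sin_neg, cos_neg, sin_PI2, cos_PI2. lra.
  - change (th G T F M (S (S n)) t) with (Kop (sqrt M) T (fun s => fN G F M s (th G T F M (S n) s)) t).
    change (th G T F M (S n) t) with (Kop (sqrt M) T (fun s => fN G F M s (th G T F M n s)) t).
    apply K_mono; auto. apply sqrtM_pos; auto. apply hn_cont; auto. apply (hn_cont G T F M (S n)); auto.
    intros s _. apply fN_mono; auto. lra. specialize (HM s). lra.
Qed.

Lemma th_low G T F M : Hyp G T F M -> forall n t, - (PI / 2) <= th G T F M n t.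
Proof.
  intros HH. induction n; intros t. simpl. lra.
  eapply Rle_trans. apply IHn. apply th_mono; auto.
Qed.

Lemma th_low1 G T F M : Hyp G T F M -> forall n t, - (PI / 2) + G / M <= th G T F M (S n) t.
Proof.
  intros HH. pose proof (Hyp_M _ _ _ _ HH) as HM1. pose proof HH as HH'. destruct HH as (HG & HT & Hc & Hp & HM).
  pose proof PI_RGT_0.
  induction n; intros t.
  - simpl. apply Rle_trans with (Kop (sqrt M) T (fun _ => - M * (PI / 2) + G) t).
    + rewrite K_const. rewrite sqrtM_sq by auto. right. field. lra. apply sqrtM_pos; auto. auto.
    + apply K_mono; auto. apply sqrtM_pos; auto. intros; apply continuous_const.
      apply (hn_cont G T F M 0); auto.
      intros s _. simpl. unfold fN. rewrite sin_neg, cos_neg, sin_PI2, cos_PI2. lra.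
  - eapply Rle_trans. apply IHn. apply th_mono; auto.
Qed.

Lemma th_up1 G T F M : Hyp G T F M -> forall n t, th G T F M (S n) t <= PI / 2 - G / M.
Proof.
  intros HH. pose proof (Hyp_M _ _ _ _ HH) as HM1. pose proof HH as HH'. destruct HH as (HG & HT & Hc & Hp & HM).
  pose proof PI_RGT_0.
  intros n t. simpl. apply Rle_trans with (Kop (sqrt M) T (fun _ => M * (PI / 2) - G) t).
  - apply K_mono; auto. apply sqrtM_pos; auto. apply hn_cont; auto. intros; apply continuous_const.
    intros s _. replace (M * (PI / 2) - G) with (fN G F M s (PI / 2)).
    apply fN_mono; auto. lra. specialize (HM s). lra. apply th_up; auto.
    unfold fN. rewrite sin_PI2, cos_PI2. ring.
  - rewrite K_const. rewrite sqrtM_sq by auto. right. field. lra. apply sqrtM_pos; auto. auto.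
Qed.

Lemma th_lip G T F M : Hyp G T F M -> forall n a b,
  Rabs (th G T F M n a - th G T F M n b) <= M * (PI / 2 + 1) / sqrt M * Rabs (a - b).
Proof.
  intros HH. pose proof (Hyp_M _ _ _ _ HH) as HM1. pose proof HH as HH'. destruct HH as (HG & HT & Hc & Hp & HM).
  pose proof PI_RGT_0. pose proof (sqrtM_pos M HM1).
  assert (0 <= M * (PI / 2 + 1) / sqrt M) by (apply Rcomplements.Rdiv_le_0_compat; nra).
  intros [|n] a b.
  - simpl. replace (- (PI / 2) - - (PI / 2)) with 0 by ring. rewrite Rabs_R0.
    pose proof (Rabs_pos (a - b)). nra.
  - apply (lip_of_deriv _ (Kd (sqrt M) T (fun s => fN G F M s (th G T F M n s)))).
    + intros x. simpl. apply K_derive; auto. apply hn_cont; auto.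
      intros s. unfold fN. rewrite Hp. rewrite (proj2 (th_cp _ _ _ _ HH' n)). reflexivity.
    + intros x. apply Kd_bound; auto. apply hn_cont; auto.
      intros s. apply fN_bound; auto. lra. specialize (HM s). lra.
      apply Rabs_le. split. apply th_low; auto. apply th_up; auto.
Qed.

Definition thl G T F M t := real (Lim_seq (fun n => th G T F M n t)).

Lemma thl_cv G T F M : Hyp G T F M -> forall t, Un_cv (fun n => th G T F M n t) (thl G T F M t).
Proof.
  intros HH t. apply is_lim_seq_Reals. unfold thl.
  assert (E : ex_finite_lim_seq (fun n => th G T F M n t)).
  { apply ex_finite_lim_seq_incr with (PI / 2). intros; apply th_mono; auto. intros; apply th_up; auto. }
  destruct E as [l Hl]. rewrite (is_lim_seq_unique _ _ Hl). simpl. auto.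
Qed.

Lemma lim_le (u : nat -> R) l c : Un_cv u l -> (forall n, u n <= c) -> l <= c.
Proof.
  intros Hu Hc. apply is_lim_seq_Reals in Hu.
  pose proof (is_lim_seq_le u (fun _ => c) l c Hc Hu (is_lim_seq_const c)). simpl in H. auto.
Qed.

Lemma lim_ge (u : nat -> R) l c : Un_cv u l -> (forall n, c <= u n) -> c <= l.
Proof.
  intros Hu Hc. apply is_lim_seq_Reals in Hu.
  pose proof (is_lim_seq_le (fun _ => c) u c l Hc (is_lim_seq_const c) Hu). simpl in H. auto.
Qed.

Lemma thl_bounds G T F M : Hyp G T F M -> forall t,
  - (PI / 2) + G / M <= thl G T F M t <= PI / 2 - G / M.
Proof.
  intros HH t. pose proof (thl_cv _ _ _ _ HH t) as Hcv. split.
  - apply Rle_trans with (th G T F M 1 t). apply th_low1; auto.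
    apply (growing_ineq (fun n => th G T F M n t)); auto. intros n; apply th_mono; auto.
  - apply (lim_le _ _ _ Hcv). intros n. eapply Rle_trans. apply th_mono; auto. apply th_up1; auto.
Qed.

Lemma thl_per G T F M : Hyp G T F M -> forall t, thl G T F M (t + T) = thl G T F M t.
Proof.
  intros HH t. unfold thl. f_equal. apply Lim_seq_ext. intros n.
  apply (proj2 (th_cp _ _ _ _ HH n)).
Qed.

Lemma thl_lip G T F M : Hyp G T F M -> forall a b,
  Rabs (thl G T F M a - thl G T F M b) <= M * (PI / 2 + 1) / sqrt M * Rabs (a - b).
Proof.
  intros HH a b. pose proof (CV_minus _ _ _ _ (thl_cv _ _ _ _ HH a) (thl_cv _ _ _ _ HH b)) as Hcv.
  apply Rabs_le. split.
  - apply (lim_ge _ _ _ Hcv). intros n. pose proof (th_lip _ _ _ _ HH n a b). apply Rabs_le_between in H. lra.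
  - apply (lim_le _ _ _ Hcv). intros n. pose proof (th_lip _ _ _ _ HH n a b). apply Rabs_le_between in H. lra.
Qed.

Lemma Lc_nonneg M : 1 < M -> 0 <= M * (PI / 2 + 1) / sqrt M.
Proof. intros. pose proof PI_RGT_0. pose proof (sqrtM_pos M H).
  apply Rcomplements.Rdiv_le_0_compat; nra. Qed.

Lemma thl_cont G T F M : Hyp G T F M -> forall t, continuous (thl G T F M) t.
Proof.
  intros HH. apply (lip_cont _ (M * (PI / 2 + 1) / sqrt M)).
  apply Lc_nonneg. apply (Hyp_M _ _ _ _ HH). apply thl_lip; auto.
Qed.

Lemma K_small k T (g : R -> R) t e : 0 < k -> 0 < T -> (forall s, continuous g s) ->
  (forall s, t - T <= s <= t + T -> Rabs (g s) <= e) -> Rabs (Kop k T g t) <= e / (k * k).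
Proof.
  intros Hk HT C Hb. apply Rabs_le. split.
  - replace (- (e / (k * k))) with ((-e) / (k*k)) by (field; lra).
    rewrite <- (K_const k T (-e) t Hk HT). apply K_mono; auto. intros; apply continuous_const.
    intros s Hs. specialize (Hb s Hs). apply Rabs_le_between in Hb. lra.
  - rewrite <- (K_const k T e t Hk HT). apply K_mono; auto. intros; apply continuous_const.
    intros s Hs. specialize (Hb s Hs). apply Rabs_le_between in Hb. lra.
Qed.

Lemma thl_fix G T F M : Hyp G T F M -> forall t,
  thl G T F M t = Kop (sqrt M) T (fun s => fN G F M s (thl G T F M s)) t.
Proof.
  intros HH t. pose proof (Hyp_M _ _ _ _ HH) as HM1. pose proof HH as HH'. destruct HH as (HG & HT & Hc & Hp & HM).
  pose proof (sqrtM_pos M HM1) as Hk.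
  assert (Hsc : forall s, continuous (fun s => fN G F M s (thl G T F M s)) s).
  { intros; apply fN_cont; auto. apply thl_cont; auto. }
  apply (UL_sequence (fun n => th G T F M (S n) t)).
  - intros eps He. destruct (thl_cv _ _ _ _ HH' t eps He) as [N HN]. exists N. intros n Hn. apply HN. lia.
  - intros eps He.
    destruct (unif_conv (th G T F M) (thl G T F M) (M * (PI / 2 + 1) / sqrt M) (t - T) (t + T))
      with (eps := eps / (4 * M)) as [N HN].
    apply Lc_nonneg; auto. lra. apply thl_cv; auto. apply th_lip; auto. apply thl_lip; auto.
    apply Rdiv_lt_0_compat; lra.
    exists N. intros n Hn. unfold R_dist. simpl.
    rewrite K_lin; try apply hn_cont; auto.
    eapply Rle_lt_trans. apply K_small; auto.
    { intros s. apply cont_minus. apply hn_cont; auto. apply Hsc. }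
    { intros s Hs. eapply Rle_trans. apply fN_lip. lra. specialize (HM s). lra.
      apply Rmult_le_compat_l. lra. apply HN; auto. }
    rewrite sqrtM_sq by auto. apply Rmult_lt_reg_r with M. lra.
    unfold Rdiv. rewrite Rmult_assoc, Rinv_l by lra.
    replace (2 * M * (eps * / (4 * M)) * 1) with (eps / 2) by (field; lra). nra.
Qed.

Theorem theorem3p3 (G T : R) (F : R -> R)
  (hG : 0 < G) (hT : 0 < T)
  (hFc : forall t, continuous F t)
  (hFp : forall t, F (t + T) = F t) :
  exists x v : R -> R,
    (forall t, -1 < x t < 1) /\
    (forall t, x (t + T) = x t) /\
    (forall t, is_derive x t (v t)) /\
    (forall t, is_derive v t
       ((G * sqrt (1 - x t ^ 2) - v t ^ 2 / (1 - x t ^ 2)) * x t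
        - (1 - x t ^ 2) * F t)).
Proof.
  destruct (F_bounded F T hT hFc hFp) as [B [HB0 HB]].
  set (M := G + B + 1).
  assert (HH : Hyp G T F M).
  { repeat split; auto. intros t. specialize (HB t). unfold M. lra. }
  pose proof (Hyp_M _ _ _ _ HH) as HM1. pose proof (sqrtM_pos M HM1) as Hk.
  set (th0 := thl G T F M).
  set (hs := fun s => fN G F M s (th0 s)).
  set (k := sqrt M).
  assert (Hsc : forall s, continuous hs s).
  { intros; apply fN_cont; auto. apply thl_cont; auto. }
  assert (Hsp : forall s, hs (s + T) = hs s).
  { intros s. unfold hs, fN. rewrite hFp. unfold th0. rewrite thl_per; auto. }
  assert (Hth : forall t, is_derive th0 t (Kd k T hs t)).
  { intros t. apply is_derive_ext with (Kop k T hs).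
    intros s. unfold th0. rewrite (thl_fix _ _ _ _ HH s). reflexivity.
    apply K_derive; auto. }
  assert (Hd : forall t, is_derive (Kd k T hs) t (G * sin (th0 t) - F t * cos (th0 t))).
  { intros t. eapply is_derive_eqv. apply Kd_derive; auto.
    unfold k. rewrite sqrtM_sq by auto.
    replace (Kop (sqrt M) T hs t) with (th0 t) by (unfold th0; apply thl_fix; auto).
    unfold hs, fN. simpl. ring. }
  assert (Hcos : forall t, 0 < cos (th0 t)).
  { intros t. pose proof (thl_bounds _ _ _ _ HH t). assert (0 < G / M) by (apply Rdiv_lt_0_compat; lra).
    apply cos_gt_0; unfold th0; lra. }
  exists (fun t => sin (th0 t)), (fun t => cos (th0 t) * Kd k T hs t).
  split; [|split; [|split]].
  - intros t. pose proof (Hcos t). pose proof (sin2_cos2 (th0 t)). unfold Rsqr in H0.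
    split; nra.
  - intros t. unfold th0. rewrite thl_per; auto.
  - intros t. eapply is_derive_eqv.
    apply (is_derive_comp sin th0). apply is_derive_Reals, derivable_pt_lim_sin. apply Hth.
    unfold scal; simpl. unfold mult; simpl. ring.
  - intros t. eapply is_derive_eqv.
    apply (is_derive_mult (fun t => cos (th0 t)) (Kd k T hs)).
    eapply is_derive_comp. apply is_derive_Reals, derivable_pt_lim_cos. apply Hth.
    apply Hd. intros; apply Rmult_comm.
    pose proof (Hcos t). pose proof (sin2_cos2 (th0 t)). unfold Rsqr in H0.
    replace (1 - sin (th0 t) ^ 2) with (cos (th0 t) ^ 2) by lra.
    rewrite sqrt_pow2 by lra.
    unfold scal, plus, mult; simpl. unfold mult; simpl. field. lra.
Qed.
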